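(* Let $\bar A_1,\bar A_2$ be arrival processes such that $\bar A_i$ is $(\lambda_i,\nu_i)$-constrained for $i=1,2$, with $\lambda_i>0$, $\nu_i\ge 0$. Then their superposition (aggregate process) $\bar A$ is $(\lambda,\nu)$-constrained with $$\lambda=\lambda_1+\lambda_2,\qquad \nu=\nu_1+\nu_2+1.$$
   Context: An arrival process is described by its arrival time function: a nondecreasing sequence $(\bar A(n))_{n\ge 1}$ of nonnegative real numbers, where $\bar A(n)$ is the arrival time of packet $n$. By convention $\bar A(0)=0$, and $\bar A(m,n):=\bar A(n)-\bar A(m)$ for integers $n\ge m\ge 0$. Write $x^+=\max\{x,0\}$. For constants $\lambda>0$ and $\nu\ge 0$, the process is called $(\lambda,\nu)$-constrained if $\bar A(m,n)\ge \frac{1}{\lambda}(n-m-\nu)^+$ for all integers $n\ge m\ge 0$. The superposition (aggregate) of arrival processes $\bar A_1,\dots,\bar A_I$ (each with $\bar A_i(0)=0$) is the arrival process $\bar A$ given by $\bar A(n)=\inf\{\max_{1\le i\le I}\bar A_i(m_i): m_1,\dots,m_I\ge 0 \text{ integers},\ m_1+\cdots+m_I=n\}$ for $n\ge 0$; equivalently, $\bar A(n)$ is the $n$-th smallest element (counted with multiplicity) of the multiset of all packet arrival times $\{\bar A_i(k): 1\le i\le I,\ k\ge 1\}$. *)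

(* Defs.v *)
From Stdlib Require Import Reals Lra Lia.
Open Scope R_scope.

(** An arrival process: arrival time function n |-> A n (A 0 = 0 by convention),
    nonnegative and nondecreasing. *)
Definition arrival_process (A : nat -> R) : Prop :=
  A 0%nat = 0 /\
  (forall n, 0 <= A n) /\
  (forall m n, (m <= n)%nat -> A m <= A n).

Definition incr (A : nat -> R) (m n : nat) : R := A n - A m.

Definition constrained (lam nu : R) (A : nat -> R) : Prop :=
  forall m n : nat, (m <= n)%nat ->
    incr A m n >= / lam * Rmax (INR n - INR m - nu) 0.

Fixpoint min_upto (f : nat -> R) (n : nat) : R :=
  match n with
  | O => f O
  | S k => Rmin (min_upto f k) (f (S k))
  end.

(** Superposition of two arrival processes:
    A n = inf { max (A1 m1, A2 m2) : m1 + m2 = n }, which for two processes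
    is the minimum over the finitely many splits m1 = 0..n, m2 = n - m1. *)
Definition superpose2 (A1 A2 : nat -> R) (n : nat) : R :=
  min_upto (fun m1 => Rmax (A1 m1) (A2 (n - m1)%nat)) n.

(* Main.v *)
Require Import Defs.
From Stdlib Require Import Reals Lra Lia Classical.
Open Scope R_scope.

Definition hh (lam nu : R) (x : nat) : R := / lam * Rmax (INR x - nu) 0.

Lemma hh_mono lam nu x y : 0 < lam -> (x <= y)%nat -> hh lam nu x <= hh lam nu y.
Proof.
  intros Hl Hxy. unfold hh. apply Rmult_le_compat_l.
  - left; apply Rinv_0_lt_compat; lra.
  - apply le_INR in Hxy. unfold Rmax; repeat destruct Rle_dec; lra.
Qed.

Lemma constr_h lam nu A a c : constrained lam nu A -> (c <= a)%nat ->
  A a - A c >= hh lam nu (a - c).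
Proof.
  intros H Hca. unfold hh. rewrite minus_INR by lia. apply (H c a Hca).
Qed.

Lemma min_upto_le f n j : (j <= n)%nat -> min_upto f n <= f j.
Proof.
  induction n; intros Hj; simpl.
  - replace j with 0%nat by lia; lra.
  - destruct (Nat.eq_dec j (S n)) as [->|Hne].
    + apply Rmin_r.
    + eapply Rle_trans; [apply Rmin_l|]. apply IHn; lia.
Qed.

Lemma min_upto_attain f n : exists j, (j <= n)%nat /\ min_upto f n = f j.
Proof.
  induction n; simpl.
  - exists 0%nat; split; auto.
  - destruct IHn as [j [Hj Heq]]. unfold Rmin. destruct Rle_dec.
    + exists j; split; [lia|auto].
    + exists (S n); split; auto.
Qed.

Lemma least_exists (P : nat -> Prop) k : P k ->
  exists x, (x <= k)%nat /\ P x /\ (x = 0%nat \/ ~ P (x - 1)%nat).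
Proof.
  induction k; intros Hk.
  - exists 0%nat; auto.
  - destruct (classic (P k)) as [Hp|Hp].
    + destruct (IHk Hp) as [x [? [? ?]]]. exists x; split; [lia|auto].
    + exists (S k); split; [lia|split; auto]. right. replace (S k - 1)%nat with k by lia. auto.
Qed.

Lemma F1 lam1 lam2 nu1 nu2 k : 0 < lam1 -> 0 < lam2 -> 0 <= nu1 -> 0 <= nu2 ->
  / (lam1 + lam2) * Rmax (INR k - (nu1 + nu2 + 1)) 0 <= hh lam1 nu1 k.
Proof.
  intros. unfold hh.
  apply Rmult_le_compat.
  - left; apply Rinv_0_lt_compat; lra.
  - apply Rmax_r.
  - apply Rinv_le_contravar; lra.
  - unfold Rmax; repeat destruct Rle_dec; lra.
Qed.

Lemma F3 lam1 lam2 nu1 nu2 k x : 0 < lam1 -> 0 < lam2 -> 0 <= nu1 -> 0 <= nu2 ->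
  (1 <= x)%nat -> (x <= k)%nat ->
  hh lam1 nu1 (x - 1) < / (lam1 + lam2) * Rmax (INR k - (nu1 + nu2 + 1)) 0 ->
  / (lam1 + lam2) * Rmax (INR k - (nu1 + nu2 + 1)) 0 <= hh lam2 nu2 (k - x).
Proof.
  intros H1 H2 H3 H4 Hx Hxk Hlt. unfold hh in *.
  rewrite minus_INR in * by lia. simpl INR in *.
  set (K := INR k) in *. set (X := INR x) in *.
  assert (HL : 0 < lam1 + lam2) by lra.
  destruct (Rle_dec (K - (nu1 + nu2 + 1)) 0) as [Hle|Hgt].
  - rewrite Rmax_right in * by lra. rewrite Rmult_0_r in *.
    assert (0 <= / lam1 * Rmax (X - 1 - nu1) 0).
    { apply Rmult_le_pos; [left; apply Rinv_0_lt_compat; lra| apply Rmax_r]. }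
    apply Rmult_le_pos; [left; apply Rinv_0_lt_compat; lra| apply Rmax_r].
  - assert (Em : Rmax (K - (nu1 + nu2 + 1)) 0 = K - (nu1 + nu2 + 1)) by (apply Rmax_left; lra).
    rewrite Em in Hlt |- *.
    set (w := / (lam1 + lam2) * (K - (nu1 + nu2 + 1))) in *.
    assert (Hw : w * lam1 + w * lam2 = K - (nu1 + nu2 + 1)) by (unfold w; field; lra).
    assert (Hm : Rmax (X - 1 - nu1) 0 < lam1 * w).
    { apply (Rmult_lt_compat_l lam1) in Hlt; auto.
      rewrite <- Rmult_assoc, Rinv_r, Rmult_1_l in Hlt by lra. exact Hlt. }
    assert (HX : X - 1 - nu1 < lam1 * w) by (eapply Rle_lt_trans; [apply Rmax_l|exact Hm]).
    assert (Hy : lam2 * w <= Rmax (K - X - nu2) 0).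
    { eapply Rle_trans; [|apply Rmax_l]. lra. }
    apply (Rmult_le_compat_l (/ lam2)) in Hy; [|left; apply Rinv_0_lt_compat; lra].
    rewrite <- Rmult_assoc, Rinv_l, Rmult_1_l in Hy by lra. exact Hy.
Qed.

Theorem lemma5 (A1 A2 : nat -> R) (lam1 lam2 nu1 nu2 : R) :
  arrival_process A1 -> arrival_process A2 ->
  0 < lam1 -> 0 < lam2 -> 0 <= nu1 -> 0 <= nu2 ->
  constrained lam1 nu1 A1 -> constrained lam2 nu2 A2 ->
  constrained (lam1 + lam2) (nu1 + nu2 + 1) (superpose2 A1 A2).
Proof.
  intros [P10 [P1n P1m]] [P20 [P2n P2m]] Hl1 Hl2 Hn1 Hn2 C1 C2 m n Hmn.
  unfold incr.
  rewrite <- minus_INR by lia.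
  set (k := (n - m)%nat).
  set (D := / (lam1 + lam2) * Rmax (INR k - (nu1 + nu2 + 1)) 0).
  destruct (min_upto_attain (fun j => Rmax (A1 j) (A2 (n - j)%nat)) n) as [a [Ha Heq]].
  unfold superpose2 at 1. rewrite Heq. cbv beta.
  set (b := (n - a)%nat).
  set (M := Rmax (A1 a) (A2 b)).
  assert (Hma : A1 a <= M) by apply Rmax_l.
  assert (Hmb : A2 b <= M) by apply Rmax_r.
  assert (HD0 : 0 <= D).
  { apply Rmult_le_pos; [left; apply Rinv_0_lt_compat; lra| apply Rmax_r]. }
  assert (Suff : forall c, (c <= m)%nat -> A1 c + D <= M -> A2 (m - c)%nat + D <= M ->
            superpose2 A1 A2 m <= M - D).
  { intros c Hc H1 H2. eapply Rle_trans.
    - apply (min_upto_le (fun j => Rmax (A1 j) (A2 (m - j)%nat)) m c Hc).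
    - cbv beta. unfold Rmax at 1. destruct Rle_dec; lra. }
  cut (superpose2 A1 A2 m <= M - D); [fold D; lra|].
  destruct (least_exists (fun x => D <= hh lam1 nu1 x) k) as [x0 [Hx0k [Hx0 Hx0l]]].
  { apply F1; auto. }
  assert (H2 : D <= hh lam2 nu2 (k - x0)).
  { destruct Hx0l as [->|Hn].
    - replace (k - 0)%nat with k by lia. unfold D. rewrite (Rplus_comm lam1), (Rplus_comm nu1).
      apply F1; auto.
    - apply F3; auto; [|apply Rnot_le_lt; exact Hn].
      destruct x0; [|lia]. exfalso. apply Hn. simpl. exact Hx0. }
  destruct (Compare_dec.le_lt_dec x0 a) as [Hxa|Hxa]; destruct (Compare_dec.le_lt_dec (k - x0) b) as [Hyb|Hyb].
  - apply (Suff (a - x0)%nat). lia.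
    + pose proof (constr_h _ _ _ a (a - x0) C1 ltac:(lia)).
      replace (a - (a - x0))%nat with x0 in H by lia. lra.
    + pose proof (constr_h _ _ _ b (m - (a - x0)) C2 ltac:(unfold b, k in *; lia)).
      replace (b - (m - (a - x0)))%nat with (k - x0)%nat in H by (unfold b, k in *; lia). lra.
  - apply (Suff (a - (k - b))%nat). unfold b, k in *; lia.
    + pose proof (constr_h _ _ _ a (a - (k - b)) C1 ltac:(lia)).
      pose proof (hh_mono lam1 nu1 x0 (a - (a - (k - b))) Hl1 ltac:(unfold b, k in *; lia)).
      lra.
    + replace (m - (a - (k - b)))%nat with 0%nat by (unfold b, k in *; lia).
      pose proof (constr_h _ _ _ a (a - (k - b)) C1 ltac:(lia)).
      pose proof (hh_mono lam1 nu1 x0 (a - (a - (k - b))) Hl1 ltac:(unfold b, k in *; lia)).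
      pose proof (P1n (a - (k - b))%nat). lra.
  - apply (Suff 0%nat). lia.
    + pose proof (constr_h _ _ _ b (m - 0) C2 ltac:(unfold b, k in *; lia)).
      pose proof (hh_mono lam2 nu2 (k - x0) (b - (m - 0)) Hl2 ltac:(unfold b, k in *; lia)).
      pose proof (P2n (m - 0)%nat). lra.
    + pose proof (constr_h _ _ _ b (m - 0) C2 ltac:(unfold b, k in *; lia)).
      pose proof (hh_mono lam2 nu2 (k - x0) (b - (m - 0)) Hl2 ltac:(unfold b, k in *; lia)).
      lra.
  - exfalso. unfold b, k in *. lia.
Qed.
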